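(* For each positive integer $n\ge 4$, there exists a family of $n$ digraphs of order $4^n$, each strongly connected and non symmetric, which are pairwise integral strongly quasi-cospectral.
   Context: A sidigraph is a digraph (no loops, at most one arc from $u$ to $v$) with a sign $\pm1$ on each arc; its adjacency matrix has entry $\sigma(v_i,v_j)$ if there is an arc from $v_i$ to $v_j$ and $0$ otherwise, and its spectrum is the multiset of eigenvalues of this matrix. An (unsigned) digraph is identified with the sidigraph having all arcs positive. A sidigraph on a digraph $D$ is a sidigraph whose underlying digraph is $D$. Two (si)digraphs are cospectral if they have the same spectrum. The sign of a cycle is the product of its arc signs; a sidigraph is cycle balanced if every directed cycle is positive. A digraph is symmetric if whenever $(u,v)$ is an arc so is $(v,u)$; it is strongly connected in the usual sense. Two digraphs $D_1,D_2$ are integral strongly quasi-cospectral if $D_1$ and $D_2$ are cospectral with all eigenvalues integers, and there exist non cycle balanced sidigraphs $S_1$ on $D_1$ and $S_2$ on $D_2$ that are cospectral with all eigenvalues integers. *)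

(* Defs.v *)
From HB Require Import structures.
From mathcomp Require Import all_boot all_order all_algebra all_fingroup all_field.
Set Implicit Arguments. Unset Strict Implicit. Unset Printing Implicit Defensive.
Import Order.TTheory GRing.Theory Num.Theory.
Local Open Scope ring_scope.

(* A digraph on the vertex set 'I_N: an arc relation with no loops
   (at most one arc u -> v is automatic for a relation). *)
Definition is_digraph N (D : rel 'I_N) : Prop := irreflexive D.

(* A signature: sg u v = true means the arc (u,v) is negative.
   Only values on arcs of D matter. *)
Definition signing N := 'I_N -> 'I_N -> bool.

Definition sgval (b : bool) : algC := (-1) ^+ b.

Definition sadj N (D : rel 'I_N) (sg : signing N) : 'M[algC]_N :=
  \matrix_(i, j) (if D i j then sgval (sg i j) else 0).

Definition adj N (D : rel 'I_N) : 'M[algC]_N := sadj D (fun _ _ => false).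

Definition spectrum N (A : 'M[algC]_N) : algC -> nat :=
  fun z => mup z (char_poly A).

Definition cospectral N M (A : 'M[algC]_N) (B : 'M[algC]_M) : Prop :=
  forall z, spectrum A z = spectrum B z.

Definition integral_spectrum N (A : 'M[algC]_N) : Prop :=
  forall z, root (char_poly A) z -> z \in Num.int.

Definition directed_cycle N (D : rel 'I_N) (c : seq 'I_N) : bool :=
  [&& c != [::], uniq c & path.cycle D c].

Definition cycle_sign N (sg : signing N) (c : seq 'I_N) : algC :=
  \prod_(p <- zip c (rot 1 c)) sgval (sg p.1 p.2).

Definition cycle_balanced N (D : rel 'I_N) (sg : signing N) : Prop :=
  forall c, directed_cycle D c -> cycle_sign sg c = 1.

Definition strongly_connected N (D : rel 'I_N) : Prop :=
  forall u v, connect D u v.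

Definition symmetric_digraph N (D : rel 'I_N) : Prop :=
  forall u v, D u v -> D v u.

Definition isomorphic N (D1 D2 : rel 'I_N) : Prop :=
  exists f : {perm 'I_N}, forall u v, D1 u v = D2 (f u) (f v).

Definition integral_strongly_quasi_cospectral N (D1 D2 : rel 'I_N) : Prop :=
  [/\ cospectral (adj D1) (adj D2),
      integral_spectrum (adj D1),
      integral_spectrum (adj D2) &
      exists (s1 s2 : signing N),
        [/\ ~ cycle_balanced D1 s1, ~ cycle_balanced D2 s2,
            cospectral (sadj D1 s1) (sadj D2 s2),
            integral_spectrum (sadj D1 s1) & integral_spectrum (sadj D2 s2)]].

(* Main.v *)
Require Import Defs.
From HB Require Import structures.
From mathcomp Require Import all_boot all_order all_algebra all_fingroup all_field.
From mathcomp Require Import ring zify lra.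
Set Implicit Arguments. Unset Strict Implicit. Unset Printing Implicit Defensive.
Import Order.TTheory GRing.Theory Num.Theory.
Definition O23 : nat -> bool := fun t => (t == 2) || (t == 3).
Definition O2 : nat -> bool := fun t => t == 2.
Definition O3 : nat -> bool := fun t => t == 3.
Definition O0 : nat -> bool := fun t => t == 0.
Definition O1 : nat -> bool := fun t => t == 1.

Definition gl (m i v : nat) : nat :=
  if v < 4 * m then (if v < i then 0 else 1)
  else if v < 8 * m then (if v < 8 * m - i then 0 else 1)
  else if v < 12 * m then (if v < 12 * m - i then 0 else 1)
  else if v < 14 * m then 2 else 3.

Definition Ov (m v : nat) : nat -> bool :=
  if v < 4 * m then O23 else if v < 8 * m then O2
  else if v < 12 * m then O3
  else if (v == 12 * m) || (v == 14 * m) then O0 else O1.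

Lemma seg (a b : nat) (F : nat -> nat) (K : nat) :
  (forall v, a <= v < b -> F v = K) -> \sum_(a <= v < b) F v = (b - a) * K.
Proof. by move=> H; rewrite (eq_big_nat _ _ H) sum_nat_const_nat. Qed.

Ltac splitifs := repeat match goal with
  | |- context [if ?b then _ else _] => case: (boolP b) => ? end.

Lemma layout (m i : nat) (phi : nat -> (nat -> bool) -> nat) :
  (1 <= m) -> (i <= 4 * m) ->
  \sum_(v < 16 * m) phi (gl m i v) (Ov m v) =
  i * phi 0 O23 + (4 * m - i) * phi 1 O23 + (4 * m - i) * phi 0 O2 + i * phi 1 O2
  + (4 * m - i) * phi 0 O3 + i * phi 1 O3 + phi 2 O0 + (2 * m - 1) * phi 2 O1
  + phi 3 O0 + (2 * m - 1) * phi 3 O1.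
Proof.
move=> hm hi.
rewrite -(big_mkord xpredT (fun v => phi (gl m i v) (Ov m v))).
rewrite (@big_cat_nat _ _ _ i 0 (16 * m)); [|lia|lia].
rewrite (@big_cat_nat _ _ _ (4 * m) i (16 * m)); [|lia|lia].
rewrite (@big_cat_nat _ _ _ (8 * m - i) (4 * m) (16 * m)); [|lia|lia].
rewrite (@big_cat_nat _ _ _ (8 * m) (8 * m - i) (16 * m)); [|lia|lia].
rewrite (@big_cat_nat _ _ _ (12 * m - i) (8 * m) (16 * m)); [|lia|lia].
rewrite (@big_cat_nat _ _ _ (12 * m) (12 * m - i) (16 * m)); [|lia|lia].
rewrite (@big_cat_nat _ _ _ (12 * m).+1 (12 * m) (16 * m)); [|lia|lia].
rewrite (@big_cat_nat _ _ _ (14 * m) (12 * m).+1 (16 * m)); [|lia|lia].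
rewrite (@big_cat_nat _ _ _ (14 * m).+1 (14 * m) (16 * m)); [|lia|lia].
rewrite (@seg 0 i _ (phi 0 O23)); last first.
  by move=> v hv; rewrite /gl /Ov; splitifs => //; lia.
rewrite (@seg i (4 * m) _ (phi 1 O23)); last first.
  by move=> v hv; rewrite /gl /Ov; splitifs => //; lia.
rewrite (@seg (4 * m) (8 * m - i) _ (phi 0 O2)); last first.
  by move=> v hv; rewrite /gl /Ov; splitifs => //; lia.
rewrite (@seg (8 * m - i) (8 * m) _ (phi 1 O2)); last first.
  by move=> v hv; rewrite /gl /Ov; splitifs => //; lia.
rewrite (@seg (8 * m) (12 * m - i) _ (phi 0 O3)); last first.
  by move=> v hv; rewrite /gl /Ov; splitifs => //; lia.
rewrite (@seg (12 * m - i) (12 * m) _ (phi 1 O3)); last first.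
  by move=> v hv; rewrite /gl /Ov; splitifs => //; lia.
rewrite (@seg (12 * m) (12 * m).+1 _ (phi 2 O0)); last first.
  by move=> v hv; rewrite /gl /Ov; splitifs => //; lia.
rewrite (@seg (12 * m).+1 (14 * m) _ (phi 2 O1)); last first.
  by move=> v hv; rewrite /gl /Ov; splitifs => //; lia.
rewrite (@seg (14 * m) (14 * m).+1 _ (phi 3 O0)); last first.
  by move=> v hv; rewrite /gl /Ov; splitifs => //; lia.
rewrite (@seg (14 * m).+1 (16 * m) _ (phi 3 O1)); last first.
  by move=> v hv; rewrite /gl /Ov; splitifs => //; lia.
have -> : (12 * m).+1 - 12 * m = 1 by lia.
have -> : (14 * m).+1 - 14 * m = 1 by lia.
have -> : 14 * m - (12 * m).+1 = 2 * m - 1 by lia.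
have -> : 16 * m - (14 * m).+1 = 2 * m - 1 by lia.
have -> : 8 * m - (8 * m - i) = i by lia.
have -> : 12 * m - (12 * m - i) = i by lia.
have -> : 8 * m - i - 4 * m = 4 * m - i by lia.
have -> : 12 * m - i - 8 * m = 4 * m - i by lia.
by rewrite subn0 !mul1n /= !addnA.
Qed.

Local Open Scope ring_scope.
Lemma sylv_aux (F : fieldType) (N k : nat) (S : 'M[F]_(N,k)) (R : 'M[F]_(k,N)) :
  'X ^+ k * char_poly (S *m R) = 'X ^+ N * char_poly (R *m S).
Proof.
set Sp := map_mx polyC S; set Rp := map_mx polyC R.
pose B1 := block_mx (1%:M : 'M[{poly F}]_N) 0 (- Rp) ('X%:M : 'M_k).
pose B2 := block_mx ('X%:M : 'M[{poly F}]_N) Sp Rp (1%:M : 'M_k).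
pose B3 := block_mx (1%:M : 'M[{poly F}]_N) 0 (- Rp) (1%:M : 'M_k).
have dB1 : \det B1 = 'X ^+ k by rewrite det_lblock det1 det_scalar mul1r.
have dB3 : \det B3 = 1 by rewrite det_lblock !det1 mul1r.
have e12 : B1 *m B2 = block_mx ('X%:M) Sp 0 (char_poly_mx (R *m S)).
  rewrite mulmx_block !mul0mx !addr0 !mul1mx mul_mx_scalar mul_scalar_mx.
  by rewrite scalerN addNr mulmx1 /char_poly_mx map_mxM mulNmx addrC.
have e23 : B2 *m B3 = block_mx (char_poly_mx (S *m R)) Sp 0 1.
  rewrite mulmx_block !mulmx0 !mulmx1 !mul1mx add0r addrN.
  by rewrite add0r /char_poly_mx map_mxM mulmxN.
have h2 : \det B2 = char_poly (S *m R).
  by rewrite -[\det B2]mulr1 -dB3 -det_mulmx e23 det_ublock det1 mulr1.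
by rewrite -dB1 -h2 -det_mulmx e12 det_ublock det_scalar.
Qed.

Lemma sylvester (F : fieldType) (N k : nat) (S : 'M[F]_(N,k)) (R : 'M[F]_(k,N)) :
  (k <= N)%N -> char_poly (S *m R) = 'X ^+ (N - k) * char_poly (R *m S).
Proof.
move=> kN; have := sylv_aux S R.
have -> : ('X ^+ N : {poly F}) = 'X ^+ k * 'X ^+ (N - k) by rewrite -exprD subnKC.
rewrite -mulrA => /mulfI; apply.
by rewrite expf_neq0 // polyX_eq0.
Qed.
Lemma annih3 (P : 'M[algC]_(4,2)) (Q : 'M[algC]_(2,4)) (b : algC) :
  (Q *m P) *m (Q *m P) = (b ^+ 2)%:M ->
  horner_mx (P *m Q) ('X ^+ 3 - (b ^+ 2)%:P * 'X) = 0.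
Proof.
move=> hQP.
rewrite rmorphB !rmorphM /= horner_mx_C !horner_mx_X -!mulmxE.
have -> : P *m Q *m (P *m Q *m (P *m Q)) = P *m (Q *m P *m (Q *m P)) *m Q.
  by rewrite !mulmxA.
by rewrite hQP mul_mx_scalar -scalemxAl mul_scalar_mx -scalemxAl mul_scalar_mx scalerA -expr2 subrr.
Qed.

Lemma int_spec (N : nat) (S : 'M[algC]_(N,4)) (R : 'M[algC]_(4,N))
  (P : 'M[algC]_(4,2)) (Q : 'M[algC]_(2,4)) (b : algC) :
  (4 <= N)%N -> b \in Num.int -> R *m S = P *m Q ->
  (Q *m P) *m (Q *m P) = (b ^+ 2)%:M ->
  forall z, root (char_poly (S *m R)) z -> z \in Num.int.
Proof.
move=> hN hb hRS hQP z; rewrite sylvester // rootM => /orP [].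
  by rewrite /root hornerXn expf_eq0 => /andP [_ /eqP ->]; rewrite rpred0.
rewrite -root_mxminpoly hRS => /(root_dvdp (mxminpoly_min (annih3 hQP))).
rewrite /root !hornerE.
have -> : z ^+ 3 - b ^+ 2 * z = z * ((z - b) * (z + b)).
  by ring.
rewrite !mulf_eq0 subr_eq0 addr_eq0 => /orP [/eqP -> | /orP [] /eqP ->].
- exact: rpred0.
- exact: hb.
- by rewrite rpredN.
Qed.
Lemma layoutN (N m i : nat) (phi : nat -> (nat -> bool) -> nat) :
  N = (16 * m)%N -> (1 <= m)%N -> (i <= 4 * m)%N ->
  \sum_(v < N) phi (gl m i v) (Ov m v) =
  (i * phi 0 O23 + (4 * m - i) * phi 1 O23 + (4 * m - i) * phi 0 O2 + i * phi 1 O2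
  + (4 * m - i) * phi 0 O3 + i * phi 1 O3 + phi 2 O0 + (2 * m - 1) * phi 2 O1
  + phi 3 O0 + (2 * m - 1) * phi 3 O1)%N.
Proof.
move=> hN hm hi.
rewrite -(big_mkord xpredT (fun v => phi (gl m i v) (Ov m v))) hN big_mkord.
exact: layout.
Qed.

Definition Sm N m : 'M[algC]_(N,4) := \matrix_(u, t) (Ov m u t)%:R.
Definition Rm N m i : 'M[algC]_(4,N) := \matrix_(t, v) (gl m i v == t)%:R.
Definition Em : 'M[algC]_4 := diag_mx (\row_(t < 4) (if t == 3 :> nat then -1 else 1)).
Definition Pm : 'M[algC]_(4,2) := \matrix_(t, a) ((t < 2)%N == (a == 0 :> nat))%:R.
Definition Qm m : 'M[algC]_(2,4) := \matrix_(a, t)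
  (if a == 0 :> nat then (if (2 <= t)%N then 4 * m else 0)%N
   else (if t == 0 :> nat then 1 else if t == 1 :> nat then 2 * m - 1 else 0)%N)%:R.

Definition Dg N m i : rel 'I_N := fun u v => Ov m u (gl m i v).
Definition sgn N m i : signing N := fun u v => gl m i v == 3.

Lemma gl_lt4 m i v : (gl m i v < 4)%N.
Proof. by rewrite /gl; splitifs. Qed.

Lemma adjE N m i : adj (@Dg N m i) = Sm N m *m Rm N m i.
Proof.
apply/matrixP => u v; rewrite !mxE.
rewrite (bigD1 (Ordinal (gl_lt4 m i v))) //= big1 ?addr0 => [|t ht].
  by rewrite !mxE /= eqxx mulr1 /Dg /sgval; case: (Ov m u _).
rewrite !mxE; suff -> : (gl m i v == t) = false by rewrite mulr0.
apply/negbTE; apply: contra ht => /eqP e; apply/eqP/val_inj => /=; by rewrite e.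
Qed.

Lemma sadjE N m i : sadj (@Dg N m i) (sgn m i) = Sm N m *m (Em *m Rm N m i).
Proof.
apply/matrixP => u v; rewrite !mxE.
rewrite (bigD1 (Ordinal (gl_lt4 m i v))) //= big1 ?addr0 => [|t ht].
  rewrite mul_diag_mx !mxE /= eqxx mulr1 /Dg /sgn /sgval.
  by case: (Ov m u _); case: (gl m i v == 3); rewrite ?mul1r ?mulr1 ?mul0r ?mulr0.
rewrite mul_diag_mx !mxE; suff -> : (gl m i v == t) = false by rewrite !mulr0.
apply/negbTE; apply: contra ht => /eqP e; apply/eqP/val_inj => /=; by rewrite e.
Qed.

Lemma RSE N m i : N = (16 * m)%N -> (1 <= m)%N -> (i <= 4 * m)%N ->
  Rm N m i *m Sm N m = Pm *m Qm m.
Proof.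
move=> hN hm hi; apply/matrixP => t t'; rewrite !mxE.
under eq_bigr do rewrite !mxE -natrM mulnb.
rewrite -natr_sum (layoutN (fun g O => ((g == t) && O t' : nat))) //.
rewrite !big_ord_recr big_ord0 /= !mxE /= add0r -!natrM -natrD; congr (_%:R).
case: t => [[|[|[|[|//]]]] ht]; case: t' => [[|[|[|[|//]]]] ht'] /=; lia.
Qed.

Lemma QPE m : (1 <= m)%N ->
  (Qm m *m Pm) *m (Qm m *m Pm) = ((4 * m)%:R ^+ 2 : algC)%:M.
Proof.
move=> hm.
have e1 : ((2 * m - 1)%:R : algC) = 2%:R * m%:R - 1 by rewrite natrB ?natrM //; lia.
have e2 : ((4 * m)%:R : algC) = 4%:R * m%:R by rewrite natrM.
apply/matrixP => a b; rewrite !mxE.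
rewrite !big_ord_recr big_ord0 /= !mxE.
rewrite !big_ord_recr !big_ord0 /= !mxE /=.
case: a => [[|[|//]] ha]; case: b => [[|[|//]] hb] /=;
  rewrite ?mulr0n ?mulr1n e1 e2; ring.
Qed.

Lemma QEPE m : (Qm m *m (Em *m Pm)) *m (Qm m *m (Em *m Pm)) = ((0 : algC) ^+ 2)%:M.
Proof.
apply/matrixP => a b; rewrite !mxE.
rewrite !big_ord_recr big_ord0 /= !mxE.
rewrite !big_ord_recr !big_ord0 /= !mul_diag_mx !mxE /=.
case: a => [[|[|//]] ha]; case: b => [[|[|//]] hb] /=; rewrite ?expr0n ?mul0rn /=; ring.
Qed.

Local Close Scope ring_scope.
Ltac dchk := rewrite /Dg /Ov /gl /O23 /O2 /O3 /O0 /O1 /=; splitifs => //=; lia.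

Lemma Dg_irr N m i : is_digraph (@Dg N m i).
Proof. by move=> u; rewrite /Dg /Ov /gl /O23 /O2 /O3 /O0 /O1 /=; splitifs. Qed.

Lemma Dg_sc N m i : N = 16 * m -> 1 <= m -> i < 4 * m -> strongly_connected (@Dg N m i).
Proof.
move=> hN hm hi.
have ha0 : 4 * m < N by lia.
have hb1 : 4 * m - 1 < N by lia.
have hx2 : 12 * m < N by lia.
have hy2 : 12 * m + 1 < N by lia.
have hx3 : 14 * m < N by lia.
pose a0 := Ordinal ha0; pose b1 := Ordinal hb1; pose x2 := Ordinal hx2.
pose y2 := Ordinal hy2; pose x3 := Ordinal hx3.
have hub : forall u, connect (Dg m i) u x2.
  move=> u; have hu := ltn_ord u.
  case: (ltnP u (8 * m)) => h1.
    by apply: connect1; dchk.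
  case: (ltnP u (12 * m)) => h2.
    apply: (connect_trans (y := x3)); first by apply: connect1; dchk.
    apply: (connect_trans (y := a0)); first by apply: connect1; dchk.
    by apply: connect1; dchk.
  case: (boolP (((u : nat) == 12 * m) || ((u : nat) == 14 * m))) => h3.
    apply: (connect_trans (y := a0)); first by apply: connect1; dchk.
    by apply: connect1; dchk.
  apply: (connect_trans (y := b1)); first by apply: connect1; dchk.
  by apply: connect1; dchk.
have from : forall v, connect (Dg m i) x2 v.
  move=> v; have hv := ltn_ord v.
  have hg := gl_lt4 m i v.
  have : (gl m i v == 0) || (gl m i v == 1) || (gl m i v == 2) || (gl m i v == 3) by lia.
  move=> /orP [/orP [/orP [] | ] | ] /eqP hgv.
  - by apply: connect1; rewrite /Dg hgv; dchk.
  - apply: (connect_trans (y := a0)); first by apply: connect1; dchk.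
    apply: (connect_trans (y := y2)); first by apply: connect1; dchk.
    by apply: connect1; rewrite /Dg hgv; dchk.
  - apply: (connect_trans (y := a0)); first by apply: connect1; dchk.
    by apply: connect1; rewrite /Dg hgv; dchk.
  - apply: (connect_trans (y := a0)); first by apply: connect1; dchk.
    apply: (connect_trans (y := y2)); first by apply: connect1; dchk.
    apply: (connect_trans (y := b1)); first by apply: connect1; dchk.
    by apply: connect1; rewrite /Dg hgv; dchk.
by move=> u v; apply: (connect_trans (hub u) (from v)).
Qed.
Ltac glchk := rewrite /gl /=; splitifs => //=; lia.

Lemma Dg_nsym N m i : N = 16 * m -> 1 <= m -> i < 4 * m -> ~ symmetric_digraph (@Dg N m i).
Proof.
move=> hN hm hi hs.
have ha0 : 4 * m < N by lia.
have hy2 : 12 * m + 1 < N by lia.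
have h1 : Dg m i (Ordinal ha0) (Ordinal hy2) by dchk.
move: (hs _ _ h1); rewrite /Dg /Ov /gl /O23 /O2 /O3 /O0 /O1 /=; splitifs => //=; lia.
Qed.

Lemma Dg_nbal N m i : N = 16 * m -> 1 <= m -> i < 4 * m ->
  ~ cycle_balanced (@Dg N m i) (sgn m i).
Proof.
move=> hN hm hi hb.
have ha0 : 4 * m < N by lia.
have hb1 : 4 * m - 1 < N by lia.
have hy2 : 12 * m + 1 < N by lia.
have hx3 : 14 * m < N by lia.
pose c := [:: Ordinal hb1; Ordinal hx3; Ordinal ha0; Ordinal hy2].
have hdc : directed_cycle (Dg m i) c.
  rewrite /directed_cycle /c /=; repeat (apply/andP; split) => //.
  all: try (rewrite ?inE -?val_eqE /=; lia).
  - dchk.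
  - dchk.
  - dchk.
  - rewrite /Dg /Ov /gl /O23 /O2 /O3 /O0 /O1 /=; splitifs => //=; lia.
have := hb _ hdc.
have e1 : (gl m i (14 * m) == 3) = true by glchk.
have e2 : (gl m i (4 * m) == 3) = false by glchk.
have e3 : (gl m i (12 * m + 1) == 3) = false by glchk.
have e4 : (gl m i (4 * m - 1) == 3) = false by glchk.
rewrite /cycle_sign /c /= !big_cons big_nil /sgn /= e1 e2 e3 e4 /Defs.sgval /=.
rewrite !expr0 !mulr1.
move=> /(congr1 (fun x => x + 1)%R); rewrite addNr => /eqP.
by rewrite eq_sym -mulr2n pnatr_eq0.
Qed.
Definition arcs N (D : rel 'I_N) : nat := \sum_(u : 'I_N) \sum_(v : 'I_N) (D u v : nat).

Lemma iso_arcs N (D1 D2 : rel 'I_N) : isomorphic D1 D2 -> arcs D1 = arcs D2.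
Proof.
move=> [f hf]; rewrite /arcs [RHS](reindex_inj (@perm_inj _ f)) /=.
apply: eq_bigr => u _; rewrite [RHS](reindex_inj (@perm_inj _ f)) /=.
by apply: eq_bigr => v _; rewrite hf.
Qed.

Lemma arcs_Dg N m i : N = 16 * m -> 1 <= m -> i <= 4 * m ->
  arcs (@Dg N m i) = 2 * (8 * m - i) + 2 * (2 * m - 1) * (4 * m + i) + 32 * m * m.
Proof.
move=> hN hm hi; rewrite /arcs exchange_big /=.
have hout : forall t, \sum_(u < N) (Ov m u t : nat) =
   (0 * O23 t + (4 * m - 0) * O23 t + (4 * m - 0) * O2 t + 0 * O2 t
  + (4 * m - 0) * O3 t + 0 * O3 t + O0 t + (2 * m - 1) * O1 t
  + O0 t + (2 * m - 1) * O1 t).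
  by move=> t; rewrite (@layoutN N m 0 (fun _ O => (O t : nat))).
under eq_bigr do rewrite hout.
rewrite (@layoutN N m i (fun g _ => (0 * O23 g + (4 * m - 0) * O23 g + (4 * m - 0) * O2 g + 0 * O2 g
  + (4 * m - 0) * O3 g + 0 * O3 g + O0 g + (2 * m - 1) * O1 g
  + O0 g + (2 * m - 1) * O1 g))) //=.
nia.
Qed.

Lemma arcs_inj m i j : 2 <= m -> i <= 4 * m -> j <= 4 * m ->
  2 * (8 * m - i) + 2 * (2 * m - 1) * (4 * m + i) + 32 * m * m =
  2 * (8 * m - j) + 2 * (2 * m - 1) * (4 * m + j) + 32 * m * m -> i = j.
Proof. move=> hm hi hj; nia. Qed.

Theorem theorem2p15 (n : nat) : (4 <= n)%N ->
  exists D : 'I_n -> rel 'I_(4 ^ n),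
    (forall i, [/\ is_digraph (D i), strongly_connected (D i)
                 & ~ symmetric_digraph (D i)]) /\
    (forall i j, i != j ->
       ~ isomorphic (D i) (D j) /\ integral_strongly_quasi_cospectral (D i) (D j)).
Proof.
move=> hn.
have [m hmd] : exists m, m = 4 ^ (n - 2) by eexists.
have hN : 4 ^ n = 16 * m by rewrite hmd -[16]/(4 ^ 2) -expnD subnKC //; lia.
have hm2 : n - 2 < m by rewrite hmd; apply: ltn_expl.
clear hmd.
have hm : 2 <= m by lia.
have hm1 : 1 <= m by lia.
have h4N : 4 <= 4 ^ n by lia.
set N := 4 ^ n in hN h4N *.
have hi : forall i : 'I_n, i < 4 * m by move=> i; have := ltn_ord i; lia.
have hi' : forall i : 'I_n, i <= 4 * m by move=> i; have := ltn_ord i; lia.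
exists (fun i => @Dg N m i); split.
  move=> i; split.
  - exact: Dg_irr.
  - exact: Dg_sc.
  - exact: Dg_nsym.
move=> i j hij; split.
  move/iso_arcs; rewrite !arcs_Dg //.
  move/arcs_inj => h; move: hij; rewrite -val_eqE /= h ?eqxx //.
have hRS : forall k : 'I_n, (Rm N m k *m Sm N m = Pm *m Qm m)%R.
  by move=> k; apply: RSE.
have hERS : forall k : 'I_n,
    ((Em *m Rm N m k) *m Sm N m = (Em *m Pm) *m Qm m)%R.
  by move=> k; rewrite -!mulmxA hRS.
split.
- by move=> z; rewrite /spectrum !adjE !(sylvester _ _ h4N) !hRS.
- move=> z; rewrite adjE; apply: (int_spec (P := Pm) (Q := Qm m) (b := ((4 * m)%:R)%R)) => //; first [exact: natr_int | exact: hRS | exact: hERS | exact: QPE | exact: QEPE | exact: rpred0].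
- move=> z; rewrite adjE; apply: (int_spec (P := Pm) (Q := Qm m) (b := ((4 * m)%:R)%R)) => //; first [exact: natr_int | exact: hRS | exact: hERS | exact: QPE | exact: QEPE | exact: rpred0].
- exists (sgn m i), (sgn m j); split.
  + exact: Dg_nbal.
  + exact: Dg_nbal.
  + by move=> z; rewrite /spectrum !sadjE !(sylvester _ _ h4N) !hERS.
  + move=> z; rewrite sadjE.
    apply: (int_spec (P := Em *m Pm) (Q := Qm m) (b := 0%R)) => //; first [exact: natr_int | exact: hRS | exact: hERS | exact: QPE | exact: QEPE | exact: rpred0].
  + move=> z; rewrite sadjE.
    apply: (int_spec (P := Em *m Pm) (Q := Qm m) (b := 0%R)) => //; first [exact: natr_int | exact: hRS | exact: hERS | exact: QPE | exact: QEPE | exact: rpred0].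
Qed.
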